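(* Let $p$, $q$ be distinct prime numbers, $r, s \geq 1$ integers, and $N = p^r q^s$. Let $D \in \mathbb{Z}_N^*$ be such that $D \bmod p$ is a quadratic non-residue in $\mathbb{Z}_p$ and $D \bmod q$ is a quadratic non-residue in $\mathbb{Z}_q$. Then for all $(x,y) \in \mathcal{H}_{D,\mathbb{Z}_N}$, $$(x,y)^{\otimes\, p^{r-1}(p+1)\, q^{s-1}(q+1)} \equiv (1,0) \pmod N,$$ where the power is taken with respect to $\otimes$.
   Context: For a commutative ring $R$ and $D \in R$, let $\mathcal{H}_{D,R} = \{(x,y) \in R \times R : x^2 - D y^2 = 1\}$, equipped with the product $(x,y) \otimes (w,z) = (xw + yzD,\ yw + xz)$; this is a commutative group with identity $(1,0)$. Here $\mathbb{Z}_N$ denotes the integers modulo $N$. *)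

(* Defs.v *)
From mathcomp Require Import all_boot all_algebra.
Set Implicit Arguments. Unset Strict Implicit. Unset Printing Implicit Defensive.
Import GRing.Theory.
Local Open Scope ring_scope.

Definition onH (R : comRingType) (D : R) (P : R * R) : Prop :=
  P.1 ^+ 2 - D * P.2 ^+ 2 = 1.

Definition hmul (R : comRingType) (D : R) (P Q : R * R) : R * R :=
  (P.1 * Q.1 + P.2 * Q.2 * D, P.2 * Q.1 + P.1 * Q.2).

Definition hpow (R : comRingType) (D : R) (P : R * R) (n : nat) : R * R :=
  iter n (hmul D P) (1, 0).

Definition qres (m a : nat) : Prop := exists x : nat, (x ^ 2 = a %[mod m])%N.

(* Main.v *)
From HB Require Import structures.
Require Import Defs.
From mathcomp Require Import all_boot all_algebra all_field.
From mathcomp Require Import ring zify.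
Set Implicit Arguments. Unset Strict Implicit. Unset Printing Implicit Defensive.
Import GRing.Theory.
Local Open Scope ring_scope.

Definition ext (R : comRingType) (D : R) : Type := (R * R)%type.
Section Ext.
Variables (R : comRingType) (D : R).
Local Notation ext := (ext D).
HB.instance Definition _ := GRing.Zmodule.on ext.
Definition eone : ext := (1, 0).
Definition emul (P Q : ext) : ext := (P.1 * Q.1 + P.2 * Q.2 * D, P.2 * Q.1 + P.1 * Q.2).
Lemma emulA : associative emul.
Proof. by move=> [a b] [c d] [e f]; rewrite /emul /=; congr pair; ring. Qed.
Lemma emulC : commutative emul.
Proof. by move=> [a b] [c d]; rewrite /emul /=; congr pair; ring. Qed.
Lemma emul1 : left_id eone emul.
Proof. by move=> [a b]; rewrite /emul /=; congr pair; ring. Qed.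
Lemma paddE (x y : R * R) : x + y = (x.1 + y.1, x.2 + y.2).
Proof. by []. Qed.
Lemma emulDl : left_distributive emul +%R.
Proof. by move=> [a b] [c d] [e f]; rewrite /emul !paddE /=; congr pair; ring. Qed.
Lemma eone_neq0 : eone != 0.
Proof. by apply/eqP => -[] /eqP; rewrite oner_eq0. Qed.
HB.instance Definition _ := GRing.Zmodule_isComNzRing.Build ext emulA emulC emul1 emulDl eone_neq0.

Definition inj (a : R) : ext := (a, 0).
Definition w : ext := (0, 1).
Lemma injD a b : inj (a + b) = inj a + inj b.
Proof. by rewrite /inj; apply: (@pair_equal_spec _ _ _ _ _ _).2; split; rewrite ?addr0. Qed.
Lemma injM a b : inj (a * b) = inj a * inj b.
Proof. by rewrite /inj; apply: (@pair_equal_spec _ _ _ _ _ _).2; split => /=; ring. Qed.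
Lemma inj1 : inj 1 = 1.
Proof. by []. Qed.
Lemma injN a : inj (- a) = - inj a.
Proof. by rewrite /inj; apply: (@pair_equal_spec _ _ _ _ _ _).2; split => //=; rewrite oppr0. Qed.
Lemma injX a n : inj (a ^+ n) = inj a ^+ n.
Proof. by elim: n => [|n IH]; rewrite ?expr0 // !exprS injM IH. Qed.
Lemma injn n : inj n%:R = n%:R.
Proof. by elim: n => [|n IH]; rewrite ?mulr0n // !mulrS injD IH. Qed.
Lemma w2 : w ^+ 2 = inj D.
Proof. by rewrite expr2 /inj; apply: (@pair_equal_spec _ _ _ _ _ _).2; split => /=; ring. Qed.
Lemma pairE x y : ((x, y) : ext) = inj x + inj y * w.
Proof. by rewrite /inj; apply: (@pair_equal_spec _ _ _ _ _ _).2; split => /=; ring. Qed.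
Lemma hpowE (P : R * R) n : hpow D P n = (P : ext) ^+ n.
Proof. by elim: n => [|n IH] //; rewrite exprS -IH. Qed.
End Ext.

Section Cg.
Variable T : comRingType.
Definition cg (pi a b : T) := exists c, a = b + pi * c.
Lemma cg_refl pi a : cg pi a a.
Proof. by exists 0; ring. Qed.
Lemma cg_sym pi a b : cg pi a b -> cg pi b a.
Proof. by case=> c ->; exists (- c); ring. Qed.
Lemma cg_trans pi a b c : cg pi a b -> cg pi b c -> cg pi a c.
Proof. by case=> u -> [v ->]; exists (u + v); ring. Qed.
Lemma cgD pi a b a' b' : cg pi a b -> cg pi a' b' -> cg pi (a + a') (b + b').
Proof. by case=> u -> [v ->]; exists (u + v); ring. Qed.
Lemma cgM pi a b a' b' : cg pi a b -> cg pi a' b' -> cg pi (a * a') (b * b').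
Proof. by case=> u -> [v ->]; exists (u * b' + b * v + pi * u * v); ring. Qed.
Lemma cgX pi a b n : cg pi a b -> cg pi (a ^+ n) (b ^+ n).
Proof.
move=> h; elim: n => [|n IH]; first exact: cg_refl.
by rewrite !exprS; apply: cgM.
Qed.
Lemma dv_nat d n (z : T) : (d %| n)%N -> n%:R * z = d%:R * ((n %/ d)%:R * z).
Proof. by move=> h; rewrite mulrA -natrM mulnC divnK. Qed.

Lemma dv_mulrn d n (x : T) : (d %| n)%N -> x *+ n = d%:R * (x *+ (n %/ d)).
Proof. by move=> h; rewrite mulr_natl -mulrnA divnK. Qed.

Lemma frob p (a b : T) : prime p -> cg p%:R ((a + b) ^+ p) (a ^+ p + b ^+ p).
Proof.
move=> pp; have := prime_gt0 pp; case: p pp => // p' pp _.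
rewrite exprDn big_ord_recr big_ord_recl /= subnn binn expr0 mulr1 mul1r subn0 bin0 !mulr1n.
exists (\sum_(i < p') a ^+ (p'.+1 - i.+1) * b ^+ i.+1 *+ ('C(p'.+1, i.+1) %/ p'.+1)).
rewrite mulr_sumr; set S := \sum_(i < p') _. rewrite -addrA (addrC S) addrA; congr (_ + _).
apply: eq_bigr => i _; rewrite /bump leq0n add1n; rewrite (@dv_mulrn p'.+1) //.
apply: prime_dvd_bin => //; apply/andP; split => //; have := ltn_ord i; lia.
Qed.

Lemma lift1 p k (c : T) : prime p -> (0 < k)%N ->
  exists c', (1 + (p ^ k)%:R * c) ^+ p = 1 + (p ^ k.+1)%:R * c'.
Proof.
move=> pp k0; have p1 := prime_gt1 pp.
rewrite addrC exprD1n big_ord_recl /= expr0 bin0 mulr1n.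
exists (\sum_(i < p) ((p ^ (k * i.+1) * 'C(p, i.+1)) %/ p ^ k.+1)%:R * c ^+ i.+1).
rewrite mulr_sumr; congr (_ + _); apply: eq_bigr => i _; rewrite /bump leq0n add1n.
rewrite exprMn -natrX -expnM -mulrnAl -mulrnA [LHS](@dv_nat (p ^ k.+1)) //.
have hi := ltn_ord i.
case: (ltnP i.+1 p) => hip.
  rewrite expnSr; apply: dvdn_mul; first by apply: dvdn_exp2l; nia.
  by apply: prime_dvd_bin => //; apply/andP; split.
have -> : i.+1 = p by lia.
by apply: dvdn_mulr; apply: dvdn_exp2l; nia.
Qed.

Lemma liftn p (c : T) j : prime p ->
  exists c', (1 + p%:R * c) ^+ (p ^ j) = 1 + (p ^ j.+1)%:R * c'.
Proof.
move=> pp; elim: j => [|j [c' IH]]; first by exists c; rewrite expn0 expr1 expn1.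
by rewrite expnSr exprM IH; apply: lift1.
Qed.
End Cg.

Lemma Fp_eq p a b : prime p -> (a%:R : 'F_p) = b%:R -> (a = b %[mod p])%N.
Proof. by move=> pp h; have := congr1 (@nat_of_ord _) h; rewrite !val_Fp_nat. Qed.

Lemma transfer (T : comRingType) p a b : prime p -> (a%:R : 'F_p) = b%:R ->
  exists c : T, a%:R = b%:R + p%:R * c.
Proof.
move=> pp /(Fp_eq pp) /eqP h.
case: (leqP b a) => hab.
  move: h; rewrite eqn_mod_dvd // => /dvdnP [k hk].
  exists k%:R; rewrite -(subnK hab) natrD hk natrM; ring.
move: h; rewrite eq_sym eqn_mod_dvd ?(ltnW hab) // => /dvdnP [k hk].
exists (- k%:R); rewrite -(subnK (ltnW hab)) natrD hk natrM; ring.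
Qed.

Lemma fermat p x : prime p -> (x%:R : 'F_p) ^+ p = x%:R.
Proof. by move=> pp; have := expf_card (x%:R : 'F_p); rewrite card_Fp. Qed.

Lemma qresI p d x : prime p -> (x%:R : 'F_p) ^+ 2 = d%:R -> qres p d.
Proof. by move=> pp h; exists x; apply: Fp_eq pp _; rewrite natrX. Qed.

Lemma euler p d : prime p -> ~ qres p d ->
  p = (p./2).*2.+1 /\ (d%:R : 'F_p) ^+ p./2 = -1.
Proof.
move=> pp nq.
have hp : p = (p./2).*2.+1.
  case: (even_prime pp) => [p2|op].
    by exfalso; apply: nq; apply: (@qresI p d d pp); rewrite [X in _ ^+ X](esym p2) fermat.
  by have := odd_double_half p; rewrite op /=; lia.
split => //.
move: (p./2) hp => m hp.
have m0 : (0 < m)%N by have := prime_gt1 pp; lia.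
have d0 : (d%:R : 'F_p) != 0.
  apply/eqP => h; apply: nq; apply: (@qresI p d 0 pp); rewrite h; ring.
have hc := pchar_Fp pp.
have nz k : (0 < k < p)%N -> (k%:R : 'F_p) != 0.
  move=> /andP [k0 kp]; rewrite -(dvdn_pcharf hc); apply/negP => /dvdn_leq; lia.
have fx (x : 'F_p) : x != 0 -> x ^+ m.*2 = 1.
  move=> x0; apply: (mulIf x0); rewrite mul1r -exprSr -hp.
  by have := expf_card x; rewrite card_Fp.
have hsq : ((d%:R : 'F_p) ^+ m) ^+ 2 = 1 by rewrite -exprM muln2 fx.
move: hsq => /eqP; rewrite sqrf_eq1 => /orP [/eqP h1 | /eqP //].
exfalso; apply: nq.
pose f (i : 'I_m) : 'F_p := (i.+1%:R) ^+ 2.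
have finj : injective f.
  move=> i j; have hi := ltn_ord i; have hj := ltn_ord j; move/eqP; rewrite /f -subr_eq0 subr_sqr mulf_eq0 => /orP [].
    rewrite subr_eq0 => /eqP /(Fp_eq pp); rewrite !modn_small; try lia.
    by move=> [] h; apply: val_inj.
  rewrite -natrD => h; exfalso; move: h; apply/negP; apply: nz; lia.
set S := [set f i | i in 'I_m].
set R0 := [set z : 'F_p | z ^+ m == 1].
have cS : #|S| = m by rewrite card_imset // card_ord.
have SR : S \subset R0.
  apply/subsetP => z /imsetP [i _ ->]; rewrite inE /f -exprM mulnC muln2 fx //.
  apply: nz; have := ltn_ord i; lia.
have cR : (#|R0| <= m)%N.
  have pz : ('X^m - 1 : {poly 'F_p}) != 0.
    by rewrite -size_poly_eq0 -polyC1 size_XnsubC.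
  have := @max_poly_roots _ ('X^m - 1) (enum R0) pz.
  rewrite -polyC1 size_XnsubC // cardE; apply.
    by apply/allP => z; rewrite mem_enum inE /root !hornerE subr_eq0.
  exact: enum_uniq.
have eqSR : S =i R0.
  apply/(subset_cardP _ SR); apply/eqP; rewrite eqn_leq cS cR /=.
  by rewrite -cS subset_leq_card.
have : (d%:R : 'F_p) \in R0 by rewrite inE h1.
rewrite -eqSR => /imsetP [i _ hi].
by apply: (@qresI p d i.+1 pp); rewrite hi.
Qed.

Lemma cg_inj (T : comRingType) (D : T) p a b : cg (p%:R : T) a b ->
  cg (p%:R : ext D) (inj D a) (inj D b).
Proof. by case=> c ->; exists (inj D c); rewrite injD injM injn. Qed.

Lemma fermatT (T : comRingType) p x : prime p -> cg (p%:R : T) (x%:R ^+ p) x%:R.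
Proof.
move=> pp; have hF : ((x ^ p)%:R : 'F_p) = x%:R by rewrite natrX fermat.
have [c hc] := @transfer T p (x ^ p) x pp hF.
by exists c; rewrite -natrX.
Qed.

Lemma eulerT (T : comRingType) p m d : prime p -> (d%:R : 'F_p) ^+ m = -1 ->
  cg (p%:R : T) (d%:R ^+ m) (-1).
Proof.
move=> pp h.
have hF : (((d ^ m + 1)%N)%:R : 'F_p) = 0%:R by rewrite natrD natrX h; ring.
have [c hc] := @transfer T p (d ^ m + 1) 0 pp hF.
exists c; rewrite -natrX.
have -> : (d ^ m)%:R = ((d ^ m + 1)%N)%:R - 1 :> T by rewrite natrD; ring.
by rewrite hc; ring.
Qed.

Lemma local (T : comRingType) p r (x y d : nat) (X Y Dd : T) :
  prime p -> (0 < r)%N -> ~ qres p d -> X = x%:R -> Y = y%:R -> Dd = d%:R ->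
  X ^+ 2 - Dd * Y ^+ 2 = 1 ->
  exists c : ext Dd, ((X, Y) : ext Dd) ^+ (p ^ r.-1 * (p + 1)) = 1 + (p ^ r)%:R * c.
Proof.
move=> pp r0 nq eX eY eD hH.
have [hp hE] := euler pp nq.
move: (p./2) hp hE => m hp hE.
have hH' : X ^+ 2 - Y ^+ 2 * Dd = 1 by rewrite (mulrC _ Dd).
have key : cg (p%:R : ext Dd) (((X, Y) : ext Dd) ^+ p.+1) 1.
  rewrite pairE exprSr.
  apply: (@cg_trans _ _ _ ((inj Dd X + inj Dd Y * (inj Dd (-1) * w Dd)) * (inj Dd X + inj Dd Y * w Dd))).
    apply: cgM; last exact: cg_refl.
    apply: cg_trans; first exact: frob.
    have hw : w Dd ^+ p = inj Dd (Dd ^+ m) * w Dd.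
      by rewrite {1}hp exprSr -muln2 mulnC exprM w2 injX.
    rewrite exprMn hw -!injX.
    apply: cgD; first by rewrite eX; apply: cg_inj; apply: fermatT.
    apply: cgM; first by rewrite eY; apply: cg_inj; apply: fermatT.
    apply: cgM; last exact: cg_refl.
    by rewrite eD; apply: cg_inj; apply: eulerT.
  rewrite injN inj1.
  have -> : (inj Dd X + inj Dd Y * (- 1 * w Dd)) * (inj Dd X + inj Dd Y * w Dd)
    = inj Dd X ^+ 2 - inj Dd Y ^+ 2 * w Dd ^+ 2 by ring.
  by rewrite w2 -!injX -injM -injN -injD hH'; exact: cg_refl.
case: key => c hc.
have [c' hc'] := liftn c r.-1 pp.
exists c'; rewrite mulnC exprM addn1 hc hc' prednK //.
Qed.

Lemma Zp_N (N : nat) : (1 < N)%N -> (N%:R : 'Z_N) = 0.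
Proof.
by move=> h; apply: val_inj => /=; rewrite val_Zp_nat // modnn.
Qed.

Theorem mainTheorem2 (p q r s : nat) (D : 'Z_(p ^ r * q ^ s)) :
  prime p -> prime q -> p != q -> (0 < r)%N -> (0 < s)%N ->
  D \is a GRing.unit ->
  ~ qres p (nat_of_ord D) -> ~ qres q (nat_of_ord D) ->
  forall P : 'Z_(p ^ r * q ^ s) * 'Z_(p ^ r * q ^ s),
    onH D P ->
    hpow D P (p ^ r.-1 * (p + 1) * (q ^ s.-1 * (q + 1)))%N = (1, 0).
Proof.
move=> pp pq pnq r0 s0 _ nqp nqq [a b]; rewrite /onH /= => hH.
rewrite hpowE.
have eD : D = (nat_of_ord D)%:R by rewrite natr_Zp.
have ea : a = (nat_of_ord a)%:R by rewrite natr_Zp.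
have eb : b = (nat_of_ord b)%:R by rewrite natr_Zp.
have [c1 h1] := local pp r0 nqp ea eb eD hH.
have [c2 h2] := local pq s0 nqq ea eb eD hH.
set alpha := ((a, b) : ext D).
set ep := (p ^ r.-1 * (p + 1))%N.
set eqq := (q ^ s.-1 * (q + 1))%N.
have k1 : cg ((p ^ r)%:R : ext D) (alpha ^+ (ep * eqq)) 1.
  rewrite exprM h1; apply: (@cg_trans _ _ _ (1 ^+ eqq)); last by rewrite expr1n; exact: cg_refl.
  by apply: cgX; exists c1; ring.
have k2 : cg ((q ^ s)%:R : ext D) (alpha ^+ (ep * eqq)) 1.
  rewrite (mulnC ep eqq) exprM h2; apply: (@cg_trans _ _ _ (1 ^+ ep)); last by rewrite expr1n; exact: cg_refl.
  by apply: cgX; exists c2; ring.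
case: k1 => d1 hd1; case: k2 => d2 hd2.
have N1 : (1 < p ^ r * q ^ s)%N.
  have : (1 < p ^ r)%N by rewrite -{1}(expn0 p) ltn_exp2l // prime_gt1.
  have : (0 < q ^ s)%N by rewrite expn_gt0 prime_gt0.
  nia.
have N0 : ((p ^ r * q ^ s)%:R : ext D) = 0.
  by rewrite -injn Zp_N.
have cop : coprime (p ^ r) (q ^ s).
  by apply: coprimeXl; apply: coprimeXr; rewrite prime_coprime // dvdn_prime2.
have m0 : (0 < p ^ r)%N by rewrite expn_gt0 prime_gt0.
have [u _ hu] := Bezoutl (q ^ s) m0.
move: hu; rewrite (eqP cop) => /dvdnP [t ht].
have z0 : ((p ^ r)%:R * d1 : ext D) = 0.
  have e : ((p ^ r)%:R * d1 : ext D) = (1 + u * q ^ s)%:R * ((p ^ r)%:R * d1) - u%:R * ((q ^ s)%:R * ((p ^ r)%:R * d1)).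
    rewrite natrD natrM; ring.
  have e2 : ((q ^ s)%:R * ((p ^ r)%:R * d1) : ext D) = 0.
    by rewrite mulrA -natrM (mulnC (q ^ s)%N) N0 mul0r.
  have zz : ((p ^ r)%:R * d1 : ext D) = (q ^ s)%:R * d2.
    by apply: (@addrI _ 1); rewrite -hd1 -hd2.
  by rewrite e e2 mulr0 subr0 ht natrM -mulrA zz (mulrA ((p ^ r)%N%:R)) -natrM N0 mul0r mulr0.
by rewrite hd1 z0 addr0.
Qed.
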